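(* Let $G$ be a group, $s$ a central involution of $G$, $T$ a finite tree with at least one edge, and $\zeta\in G(L(T))$. Then there exists a $G$-phase $H$ of $T$ with $\Psi_L(H)=\zeta$ if and only if $\zeta\sim\mathbf{s}$.
   Context: A $G$-gain graph $(\Gamma,\psi)$ consists of a graph $\Gamma=(V_\Gamma,E_\Gamma)$ and a map $\psi$ assigning to each ordered pair $(u,v)$ of adjacent vertices an element of $G$ with $\psi(v,u)=\psi(u,v)^{-1}$; $G(\Gamma)$ is the set of such maps. For an involution $s$, $\mathbf{s}$ is the gain function constantly equal to $s$. Gain functions $\psi_1,\psi_2$ on $\Gamma$ are switching equivalent ($\psi_1\sim\psi_2$) if there is $f:V_\Gamma\to G$ with $\psi_2(u,v)=f(u)^{-1}\psi_1(u,v)f(v)$ for all adjacent $u,v$. The line graph $L(\Gamma)$ has vertex set $E_\Gamma$, two edges being adjacent iff they share an endpoint. With $V_\Gamma=\{v_1,\dots,v_n\}$, $E_\Gamma=\{e_1,\dots,e_m\}$, a $G$-phase of $\Gamma$ is a matrix $H=(H_{i,k})$ with $H_{i,k}\in G$ if $v_i\in e_k$ and $H_{i,k}=0$ otherwise. Given a fixed central involution $s$ of $G$, $\Psi_L(H)\in G(L(\Gamma))$ is defined by $\Psi_L(H)(e_p,e_q)=s\,(H_{r,p})^{-1}H_{r,q}$, where $v_r$ is the common endpoint of the adjacent edges $e_p,e_q$. *)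

(* Defs.v *)
From HB Require Import structures.
From mathcomp Require Import all_boot.
From mathcomp Require Import monoid.

Set Implicit Arguments.
Unset Strict Implicit.
Unset Printing Implicit Defensive.

Local Open Scope group_scope.

Definition simple_graph (V : finType) (adj : rel V) : Prop :=
  symmetric adj /\ irreflexive adj.

Definition is_edge (V : finType) (adj : rel V) (e : {set V}) : bool :=
  [exists u, exists v, adj u v && (e == [set u; v])].

Definition edge (V : finType) (adj : rel V) := {e : {set V} | is_edge adj e}.

Definition incident (V : finType) (adj : rel V) (v : V) (e : edge adj) : bool :=
  v \in sval e.

(* Adjacency in the line graph L(Gamma): distinct edges sharing an endpoint. *)
Definition ladj (V : finType) (adj : rel V) (p q : edge adj) : bool :=
  (p != q) && [exists r, (r \in sval p) && (r \in sval q)].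

Definition connected_graph (V : finType) (adj : rel V) : Prop :=
  forall u v : V, connect adj u v.

Definition acyclic_graph (V : finType) (adj : rel V) : Prop :=
  ~ exists c : seq V, (2 < size c)%N /\ ucycle adj c.

Definition is_tree (V : finType) (adj : rel V) : Prop :=
  simple_graph adj /\ connected_graph adj /\ acyclic_graph adj.

(* Gain functions on a graph with vertex type X and adjacency a:
   psi is defined on ordered pairs of adjacent vertices (values on
   non-adjacent pairs are irrelevant), with psi(v,u) = psi(u,v)^-1. *)
Definition is_gain (G : groupType) (X : Type) (a : X -> X -> bool)
  (psi : X -> X -> G) : Prop :=
  forall x y, a x y -> psi y x = (psi x y)^-1.

Definition switching_equiv (G : groupType) (X : Type) (a : X -> X -> bool)
  (psi1 psi2 : X -> X -> G) : Prop :=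
  exists f : X -> G, forall x y, a x y -> psi2 x y = (f x)^-1 * psi1 x y * f y.

Definition const_gain (G : groupType) (X : Type) (s : G) : X -> X -> G :=
  fun _ _ => s.

Definition central_involution (G : groupType) (s : G) : Prop :=
  s * s = 1 /\ s != 1 /\ forall g : G, s * g = g * s.

(* A G-phase H of Gamma: H v e is the entry H_{v,e}; it is an element of G
   when v is an endpoint of e (entries at non-incident pairs are 0 in the
   paper and are simply never used here). *)
Definition phase (G : groupType) (V : finType) (adj : rel V) :=
  V -> edge adj -> G.

(* The common endpoint of two adjacent edges (defaulting arbitrarily to
   [pick] when none exists, which never happens for adjacent edges). *)
Definition PsiL (G : groupType) (s : G) (V : finType) (adj : rel V)
  (H : phase G adj) : edge adj -> edge adj -> G :=
  fun p q =>
    match [pick r | (r \in sval p) && (r \in sval q)] with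
    | Some r => s * (H r p)^-1 * H r q
    | None => s
    end.

(* Main.v *)
Require Import Defs.
From HB Require Import structures.
From mathcomp Require Import all_boot.
From mathcomp Require Import monoid.
From mathcomp Require Import zify.

Local Open Scope group_scope.

Lemma invMg' (G : groupType) (x y : G) : (x * y)^-1 = y^-1 * x^-1.
Proof.
apply: mulg1_eq. by rewrite mulgA -(mulgA x) mulgV mulg1 mulgV.
Qed.

Set Implicit Arguments.
Section Tree.
Variables (G : groupType) (V : finType) (adj : rel V) (gg : V -> V -> G).
Hypothesis symA : symmetric adj.
Hypothesis irrA : irreflexive adj.
Hypothesis conA : connected_graph adj.
Hypothesis acyA : acyclic_graph adj.
Hypothesis gainA : forall x y, adj x y -> gg y x = (gg x y)^-1.

Definition rS (S : {set V}) : rel V := [rel x y | adj x y && (x \in S) && (y \in S)].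
Definition consist (S : {set V}) (c : V -> G) :=
  forall x y, x \in S -> y \in S -> adj x y -> c y = gg x y * c x.
Definition Sconn (S : {set V}) := forall x y, x \in S -> y \in S -> connect (rS S) x y.

Lemma path_rS_in (S : {set V}) x p : path (rS S) x p -> all (fun z => z \in S) p.
Proof.
elim: p x => [//|y p IH] x /= /andP[/andP[/andP[_ _] yS] pp].
by rewrite yS (IH y pp).
Qed.

Lemma cross (S : {set V}) x p : path adj x p -> x \in S -> last x p \notin S ->
  exists u v, [/\ adj u v, u \in S & v \notin S].
Proof.
elim: p x => [|y p IH] x /=; first by move=> _ ->.
move=> /andP[axy pp] xS lS.
case yS: (y \in S); first exact: (IH y pp yS lS).
by exists x, y; rewrite axy xS yS.
Qed.

Lemma no_second (S : {set V}) (u u' v : V) : Sconn S -> u \in S -> u' \in S -> u != u' ->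
  v \notin S -> adj u v -> adj u' v -> False.
Proof.
move=> hS uS u'S nuu' vS auv au'v.
have /connectP[p pp lp] := hS u u' uS u'S.
move: lp; case: (shortenP pp) => p' pp' up' _ lp.
apply: acyA; exists (v :: u :: p'); split.
  case: p' pp' up' lp => [|z p'] /=; last by [].
  by move=> _ _ eu; rewrite eu eqxx in nuu'.
rewrite /ucycle; apply/andP; split.
  rewrite /cycle /= rcons_path -lp au'v andbT symA auv /=.
  by apply: sub_path pp' => a b /andP[/andP[]].
have allS := @path_rS_in S u p' pp'.
rewrite cons_uniq up' andbT inE negb_or; apply/andP; split.
  by apply/eqP => evu; rewrite evu uS in vS.
apply/negP => vp; move/allP: allS => /(_ v vp) /=; by rewrite (negbTE vS).
Qed.

Lemma grow (r0 : V) n : 0 < n -> n <= #|V| ->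
  exists (S : {set V}) (c : V -> G), [/\ #|S| = n, Sconn S & consist S c].
Proof.
elim: n => [//|[|n] IH] _ hn.
  exists [set r0], (fun _ => 1); split.
  - by rewrite cards1.
  - by move=> x y; rewrite !inE => /eqP-> /eqP->; exact: connect0.
  - by move=> x y; rewrite !inE => /eqP-> /eqP->; rewrite irrA.
have [S [c [cS hS hc]]] := IH isT (ltnW hn).
have [y yS] : exists y, y \notin S.
  have : 0 < #|~: S| by move: (cardsC S); rewrite cS; lia.
  by case/card_gt0P => y; rewrite inE; exists y.
have [x xS] : exists x, x \in S.
  by apply/card_gt0P; rewrite cS.
have /connectP[p pp lp] := conA x y.
have [u [v [auv uS vS]]] : exists u v, [/\ adj u v, u \in S & v \notin S].
  by apply: (@cross S x p pp xS); rewrite -lp.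
pose S' := v |: S.
pose c' := fun z => if z == v then gg u v * c u else c z.
have c'S z : z \in S -> c' z = c z.
  move=> zS; rewrite /c'; case: eqP => // ezv; by move: zS; rewrite ezv (negbTE vS).
have c'v : c' v = gg u v * c u by rewrite /c' eqxx.
exists S', c'; split.
- by rewrite cardsU1 vS cS.
- have sub : subrel (rS S) (rS S').
    by move=> a b /andP[/andP[ab aS] bS]; rewrite /rS /= ab !inE aS bS !orbT.
  have toU z : z \in S' -> connect (rS S') z u.
    rewrite !inE => /orP[/eqP-> | zS].
      by apply: connect1; rewrite /rS /= symA auv !inE eqxx uS orbT.
    by apply: (connect_sub (fun a b h => connect1 (sub a b h))); apply: hS.
  move=> a b aS bS; apply: connect_trans (toU a aS) _.
  by rewrite (sym_connect_sym (e := rS S')) ?toU // => a' b'; rewrite /rS /= symA -!andbA [(a' \in S') && _]andbC.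
- have claim z : z \in S -> adj z v -> c' v = gg z v * c' z.
    move=> zS azv; rewrite c'v c'S //.
    case: (eqVneq u z) => [<- //|nuz].
    by case: (no_second hS uS zS nuz vS auv azv).
  move=> a b; rewrite !inE => /orP[/eqP-> | aS] /orP[/eqP-> | bS] ab.
  + by rewrite irrA in ab.
  + rewrite symA in ab; rewrite (claim b bS ab) (gainA ab) mulgA mulVg mul1g.
    done.
  + exact: claim.
  + rewrite !c'S //; exact: hc.
Qed.

Lemma potential (r0 : V) : exists c : V -> G, forall x y, adj x y -> c y = gg x y * c x.
Proof.
have h0 : 0 < #|V| by apply/card_gt0P; exists r0.
have [S [c [cS _ hc]]] := @grow r0 _ h0 (leqnn _).
have allS z : z \in S.
  have : ~: S = set0 by apply: cards0_eq; move: (cardsC S); rewrite cS; lia.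
  by move/setP/(_ z); rewrite !inE; case: (z \in S).
by exists c => x y; apply: hc.
Qed.
End Tree.
Unset Implicit Arguments.

Lemma edge_of (V : finType) (adj : rel V) (e : edge adj) :
  exists x y, adj x y /\ sval e = [set x; y].
Proof.
case: e => e /= /existsP[x /existsP[y /andP[axy /eqP ->]]].
by exists x, y.
Qed.

Theorem mainTheorem2 (G : groupType) (s : G) (V : finType) (adj : rel V)
  (zeta : edge adj -> edge adj -> G) :
  central_involution s ->
  is_tree adj ->
  (exists u v : V, adj u v) ->
  is_gain (@ladj V adj) zeta ->
  (exists H : phase G adj,
     forall p q : edge adj, ladj p q -> PsiL s H p q = zeta p q)
  <-> switching_equiv (@ladj V adj) zeta (@const_gain G (edge adj) s).
Proof.
move=> [_ [_ hs]] [[symA irrA] [conA acyA]] [r0 _] _; split.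
- move=> [H hH].
  pose gg := fun x y : V =>
    if [pick e : edge adj | sval e == [set x; y]] is Some e
    then H y e * (H x e)^-1 else 1.
  have pick_sym x y : [pick e : edge adj | sval e == [set y; x]] =
                      [pick e : edge adj | sval e == [set x; y]].
    apply: eq_pick => e /=.
    have -> : [set y; x] = [set x; y] by apply/setP => z; rewrite !inE orbC.
    done.
  have gainA x y : adj x y -> gg y x = (gg x y)^-1.
    move=> _; rewrite /gg pick_sym.
    case: pickP => [e _ | _]; last by rewrite invg1.
    by rewrite invMg' invgK.
  have [c hc] := @potential G V adj gg symA irrA conA acyA gainA r0.
  have ggE x y (e : edge adj) : sval e = [set x; y] -> gg x y = H y e * (H x e)^-1.
    move=> he; rewrite /gg; case: pickP => [e' /eqP he' | none].
      by have -> : e' = e by apply: val_inj; rewrite /= he' he.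
    by move: (none e); rewrite he eqxx.
  pose f := fun e : edge adj =>
    if [pick r | r \in sval e] is Some r then (H r e)^-1 * c r else 1.
  have key (e : edge adj) r1 r2 : r1 \in sval e -> r2 \in sval e ->
      (H r1 e)^-1 * c r1 = (H r2 e)^-1 * c r2.
    have [x [y [axy he]]] := @edge_of V adj e.
    have kxy : (H x e)^-1 * c x = (H y e)^-1 * c y.
      by rewrite (hc _ _ axy) (ggE _ _ _ he) !mulgA mulVg mul1g.
    rewrite he !inE => /orP[/eqP-> | /eqP->] /orP[/eqP-> | /eqP->] //.
  have fP (e : edge adj) r : r \in sval e -> f e = (H r e)^-1 * c r.
    move=> re; rewrite /f; case: pickP => [r' r'e | none]; first exact: key.
    by move: (none r); rewrite re.
  exists f => p q pq; rewrite /const_gain -hH // /PsiL.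
  case: pickP => [r /andP[rp rq] | none].
    rewrite (fP _ _ rp) (fP _ _ rq) invMg' invgK (hs ((H r p)^-1)) !mulgA !mulgK.
    by rewrite -(hs (c r)^-1) mulgVK.
  by move: pq => /andP[_ /existsP[r]]; rewrite none.
- move=> [f hf]; exists (fun r e => (f e)^-1) => p q pq.
  rewrite /PsiL; case: pickP => [r _ | none].
    have hpq := hf p q pq; rewrite /const_gain in hpq.
    rewrite invgK hs {1}hpq !mulgA mulgK mulgV mul1g.
    done.
  by move: pq => /andP[_ /existsP[r]]; rewrite none.
Qed.
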